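(* Let $m\ge 2$ be an integer, and let $A\ge 1$, $B\ge 0$, $C\ge 1$ be integers such that $p(An+B)\equiv 0 \pmod{C}$ for all integers $n\ge 0$. If $B<A$ and $A\mid m$, then for every positive integer $k$ and every integer $n\ge 0$, $$p_{\rho,m}(An+B,k)\equiv 0 \pmod{C}.$$
   Context: $p(n)$ denotes the number of partitions of $n$. Part-frequency matrices: fix an integer modulus $m\ge 2$. Every positive integer $N$ can be written uniquely as $N=jm^k$ with $k\ge 0$ and $m\nmid j$. For a partition $\lambda$, write the number of times the part $N$ occurs in base $m$ as $\sum_{\ell\ge 0} a_{N,\ell}m^\ell$ with digits $a_{N,\ell}\in\{0,\dots,m-1\}$. For each $j\ge 1$ with $m\nmid j$, let $M_j$ be the infinite matrix, with rows and columns indexed from $0$, whose entry in row $k$, column $\ell$ is $a_{jm^k,\ell}$. The partition is recovered from the sequence $(M_j)$; an entry $a$ at position $(k,\ell)$ of $M_j$ contributes $a\cdot j\cdot m^{k+\ell}$ to the weight of the partition, so entries on the same antidiagonal $k+\ell=\text{const}$ contribute in the same unit. The map $\rho$ (depending on $m$): apply to every matrix $M_j$ the following rotation of each antidiagonal. The entry at position $(k,\ell)$ with $\ell\ge 1$ moves to position $(k+1,\ell-1)$, and the entry at position $(k,0)$ moves to position $(0,k)$. The resulting sequence of matrices defines a new partition of the same integer, so $\rho$ is a permutation of the finite set of partitions of $n$. The orbit size of a partition is the size of its orbit under $\rho$. $p_{\rho,m}(n,k)$ denotes the number of partitions of $n$ lying in orbits of size $k$ under $\rho$ with modulus $m$.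 *)

(* Defs.v *)
From mathcomp Require Import all_boot.
Set Implicit Arguments. Unset Strict Implicit. Unset Printing Implicit Defensive.

(* Partitions of n, encoded by their multiplicity functions:
   f i = number of times the part i occurs (1 <= i <= n), f 0 = 0,
   and sum_i i * f i = n.  Multiplicities are at most n, so 'I_n.+1 suffices. *)
Definition is_part n (f : {ffun 'I_n.+1 -> 'I_n.+1}) : bool :=
  (f ord0 == ord0) && (\sum_(i < n.+1) i * f i == n).

Definition partn n := {f : {ffun 'I_n.+1 -> 'I_n.+1} | is_part f}.

Definition p (n : nat) : nat := #|{: partn n}|.

Definition mult n (la : partn n) (N : nat) : nat :=
  if (0 < N) && (N <= n) then nat_of_ord (sval la (inord N)) else 0.

(* m-adic valuation: largest k with m^k | N  (N >= 1 gives N = j m^k, m not | j) *)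
Definition mval (m N : nat) : nat := \max_(k < N.+1 | m ^ k %| N) k.
Definition mfree (m N : nat) : nat := N %/ m ^ mval m N.

(* entry (k, l) of the matrix M_j of a multiplicity function g :
   l-th base-m digit of the multiplicity of the part j*m^k *)
Definition pfm (m : nat) (g : nat -> nat) (j k l : nat) : nat :=
  (g (j * m ^ k) %/ m ^ l) %% m.

(* entry (k, l) of the rotated matrix: the entry at (k,l), l>=1, moves to
   (k+1,l-1) and the entry at (k,0) moves to (0,k). *)
Definition pfm_rot (m : nat) (g : nat -> nat) (j k l : nat) : nat :=
  if k is k'.+1 then pfm m g j k' l.+1 else pfm m g j l 0.

(* new multiplicity of the part N = j m^k after rotation; the base-m
   expansion is summed over digit positions l <= n, which is exact for
   multiplicity functions of partitions of n (all further digits vanish). *)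
Definition rho_mult (m n : nat) (g : nat -> nat) (N : nat) : nat :=
  \sum_(l < n.+1) pfm_rot m g (mfree m N) (mval m N) l * m ^ l.

Definition rho_ffun (m n : nat) (la : partn n) : {ffun 'I_n.+1 -> 'I_n.+1} :=
  [ffun i : 'I_n.+1 => if i == ord0 then ord0
                       else inord (rho_mult m n (mult la) i)].

(* the map rho on partitions of n (the insubd default is never used, since
   rho sends partitions of n to partitions of n) *)
Definition rho (m n : nat) (la : partn n) : partn n := insubd la (rho_ffun m la).

Definition p_rho (m n k : nat) : nat :=
  #|[pred la : partn n | order (rho m (n:=n)) la == k]|.

(* Main.v *)
Require Import Defs.
From mathcomp Require Import all_boot zify.
Import Defs.
Set Implicit Arguments. Unset Strict Implicit. Unset Printing Implicit Defensive.

Definition valid n (g : nat -> nat) :=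
  [/\ g 0 = 0, forall i, n < i -> g i = 0 & \sum_(i < n.+1) i * g i = n].

Lemma sum_trunc a c (f : nat -> nat) : c <= a -> (forall k, c <= k -> f k = 0) ->
  \sum_(k < a) f k = \sum_(k < c) f k.
Proof.
move=> ca fz; rewrite -(subnKC ca) big_split_ord /= [X in _ + X]big1 ?addn0 // => i _.
by apply: fz; rewrite leq_addr.
Qed.

Lemma term_le N (h : nat -> nat) i : i <= N -> i * h i <= \sum_(i < N.+1) i * h i.
Proof.
move=> iN; rewrite (bigD1 (Ordinal (iN : i < N.+1))) //= leq_addr //.
Qed.

Lemma valid_of_sum N w (h : nat -> nat) : (forall i, N < i -> h i = 0) -> h 0 = 0 ->
  \sum_(i < N.+1) i * h i = w -> valid w h.
Proof.
move=> hN h0 hs.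
have hw : forall i, w < i -> h i = 0.
  move=> i wi; case: (leqP i N) => iN; last by apply: hN.
  have := term_le h iN; rewrite hs => le.
  case: (h i) le => [//|x]; rewrite mulnS; lia.
split => //.
have c1 : forall k, minn N w < k -> h k = 0.
  move=> k; rewrite gtn_min => /orP [] ?; [exact: hN | exact: hw].
have e1 := @sum_trunc w.+1 (minn N w).+1 (fun i => i * h i).
have e2 := @sum_trunc N.+1 (minn N w).+1 (fun i => i * h i).
rewrite e1 ?ltnS ?geq_minr; last by move=> k kk; rewrite c1 ?muln0.
rewrite -[RHS]hs e2 ?ltnS ?geq_minl //; first by move=> k kk; rewrite c1 ?muln0.
all: try by move=> k kk; rewrite c1 ?muln0.
all: by [].
Qed.

Lemma valid_le n g : valid n g -> forall i, g i <= n.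
Proof.
case=> g0 gz gs i; case: (leqP i n) => iN; last by rewrite gz.
case: i iN => [|i] iN; first by rewrite g0.
have := term_le g iN; rewrite gs mulSn; lia.
Qed.

Lemma valid_mult n (la : partn n) : valid n (mult la).
Proof.
case: la => f fp; have /andP [/eqP f0 /eqP fs] := fp; split.
- by rewrite /mult.
- by move=> i iN; rewrite /mult; case: ifP => // /andP [_ h]; lia.
rewrite -[in RHS]fs; apply: eq_bigr => i _; rewrite /mult /=.
case: (posnP i) => [-> //|ip].
by rewrite -ltnS ltn_ord inord_val.
Qed.

Lemma mult_inj n (la la' : partn n) : mult la =1 mult la' -> la = la'.
Proof.
case: la la' => [f fp] [f' fp'] /= e; apply: val_inj => /=; apply/ffunP => i.
have /andP [/eqP f0 _] := fp; have /andP [/eqP f0' _] := fp'.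
apply: val_inj; case: (posnP i) => ip.
  have -> : i = ord0 by apply: val_inj.
  by rewrite f0 f0'.
have := e i; rewrite /mult /= ip -ltnS ltn_ord /=.
by rewrite !inord_val.
Qed.

Definition mkf n (g : nat -> nat) : {ffun 'I_n.+1 -> 'I_n.+1} := [ffun i : 'I_n.+1 => inord (g i)].

Lemma mkf_part n g : valid n g -> is_part (mkf n g).
Proof.
move=> v; have le := valid_le v; case: v => g0 _ gs.
apply/andP; split.
  by apply/eqP/val_inj; rewrite /= ffunE /= g0 inordK.
by apply/eqP; rewrite -[in RHS]gs; apply/eq_bigr => i _; rewrite ffunE inordK // ltnS le.
Qed.

Lemma mult_insubd n g (d : partn n) : valid n g -> mult (insubd d (mkf n g)) =1 g.
Proof.
move=> v i; have := mkf_part v => hpp.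
case: (v) => g0 gz _; rewrite /mult insubdK //.
case: (posnP i) => [->|ip]; first by rewrite g0.
case: (leqP i n) => iN /=; last by rewrite gz.
by rewrite ffunE inordK ?inordK // ltnS ?valid_le.
Qed.

Definition dflt n : partn n.
Proof.
exists (mkf n (fun i => if i == 1 then n else 0)).
apply: mkf_part; apply: (@valid_of_sum n) => //.
- by move=> i ni; case: eqP => // e; move: ni; rewrite e; case: n.
case: n => [|n]; first by rewrite big_ord1.
rewrite big_ord_recl big_ord_recl /= big1 => [|i _].
  by rewrite /bump /=; lia.
by rewrite muln0.
Defined.

Definition mkp n g := insubd (dflt n) (mkf n g).


Section M.
Variable m : nat.
Hypothesis m2 : 1 < m.

Lemma m0 : 0 < m. Proof. by apply: ltnW. Qed.

Lemma mval_dvd N : m ^ (mval m N) %| N.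
Proof.
rewrite /mval; apply: (big_ind (fun x => m ^ x %| N)) => //.
- by move=> x y hx hy; case: (leqP x y) => h; rewrite ?(maxn_idPr h) ?(maxn_idPl (ltnW h)).
Qed.

Lemma mval_max N k : k <= N -> m ^ k %| N -> k <= mval m N.
Proof.
move=> kN hk; rewrite /mval.
by apply: (@leq_bigmax_cond _ (fun i : 'I_N.+1 => m ^ i %| N) (fun i => nat_of_ord i) (Ordinal (kN : k < N.+1))).
Qed.

Lemma mval_not N : 0 < N -> ~~ (m ^ (mval m N).+1 %| N).
Proof.
move=> Np; apply/negP => h.
have := dvdn_leq Np h => le.
have := ltn_expl (mval m N).+1 m2 => lt.
have := mval_max (ltnW (leq_trans lt le)) h; lia.
Qed.

Lemma mfreeK N : mfree m N * m ^ (mval m N) = N.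
Proof. by rewrite /mfree divnK // mval_dvd. Qed.

Lemma mfree_ndvd N : 0 < N -> ~~ (m %| mfree m N).
Proof.
move=> Np; apply/negP => /dvdnP [q hq]; have h := mval_not Np.
rewrite -[X in _ %| X](mfreeK N) hq in h; move/negP: h; apply.
by rewrite expnS dvdn_mul // dvdn_mull.
Qed.

Lemma mfree_le N : mfree m N <= N.
Proof. by rewrite /mfree leq_div. Qed.

Lemma mval_lt N : 0 < N -> mval m N < N.
Proof.
move=> Np; have := dvdn_leq Np (mval_dvd N); have := ltn_expl (mval m N) m2; lia.
Qed.

Lemma mval0 : mval m 0 = 0.
Proof. rewrite /mval; apply: (big_ind (fun x => x = 0)) => //; [by move=> x y -> ->|by move=> [[]]]. Qed.

Lemma mfree0 : mfree m 0 = 0.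
Proof. by rewrite /mfree div0n. Qed.

Lemma mvalE j k : ~~ (m %| j) -> mval m (j * m ^ k) = k.
Proof.
move=> nd; have jp : 0 < j by case: j nd => //; rewrite dvdn0.
have Np : 0 < j * m ^ k by rewrite muln_gt0 jp expn_gt0 m0.
apply/eqP; rewrite eqn_leq; apply/andP; split; last first.
  apply: mval_max; last by rewrite dvdn_mull.
  have := ltn_expl k m2; have : m ^ k <= j * m ^ k by rewrite leq_pmull. lia.
rewrite leqNgt; apply/negP => lt.
have : m ^ k.+1 %| j * m ^ k.
  by apply: dvdn_trans (mval_dvd _); rewrite dvdn_exp2l.
by rewrite expnSr mulnC dvdn_pmul2r ?expn_gt0 ?m0 // (negbTE nd).
Qed.

Lemma mfreeE j k : ~~ (m %| j) -> mfree m (j * m ^ k) = j.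
Proof. by move=> nd; rewrite /mfree mvalE // mulnK // expn_gt0 m0. Qed.

Lemma mval_pos_dvd i : 0 < mval m i -> m %| i.
Proof.
move=> h; apply: dvdn_trans (mval_dvd i).
by rewrite -(prednK h) expnS dvdn_mulr.
Qed.

Lemma mval0_ndvd i : 0 < i -> mval m i = 0 -> ~~ (m %| i).
Proof. by move=> ip h; have := mfree_ndvd ip; rewrite /mfree h expn0 divn1. Qed.

Lemma mfree_val0 i : mval m i = 0 -> mfree m i = i.
Proof. by move=> h; rewrite /mfree h expn0 divn1. Qed.

Lemma sum_ind M (x : nat) (G : nat -> nat) :
  \sum_(i < M.+1) (x == i :> nat) * G i = if x <= M then G x else 0.
Proof.
case: leqP => h.
  rewrite (bigD1 (Ordinal (h : x < M.+1))) //= eqxx mul1n big1 ?addn0 // => i /eqP ne.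
  by case: eqP => // e; case: ne; apply: val_inj.
by rewrite big1 // => i _; case: eqP => // e; move: (ltn_ord i); rewrite -e; lia.
Qed.

Lemma decomp M (F : nat -> nat) : F 0 = 0 -> (forall x, M < x -> F x = 0) ->
  \sum_(i < M.+1) F i =
  \sum_(j < M.+1 | ~~ (m %| j)) \sum_(k < M.+1) F (j * m ^ k).
Proof.
move=> F0 Fz.
have e1 : forall j k, F (j * m ^ k) = \sum_(i < M.+1) (j * m ^ k == i) * F i.
  move=> j k; rewrite sum_ind; case: leqP => // h; exact: Fz.
transitivity (\sum_(j < M.+1 | ~~ (m %| j)) \sum_(i < M.+1) \sum_(k < M.+1) (j * m ^ k == i :> nat) * F i); last first.
  by apply: eq_bigr => j _; rewrite exchange_big; apply: eq_bigr => k _; rewrite e1.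
rewrite exchange_big /=; apply: eq_bigr => i _.
case: (posnP i) => [i0|ip].
  by rewrite i0 F0 big1 // => j _; rewrite big1 // => k _; rewrite muln0.
have e2 : forall (j k : 'I_M.+1), ~~ (m %| j) ->
    (j * m ^ k == i :> nat) = (mfree m i == j) && (mval m i == k).
  move=> j k nd; apply/idP/idP.
    by move=> /eqP <-; rewrite mfreeE // mvalE // !eqxx.
  by move=> /andP [/eqP <- /eqP <-]; rewrite mfreeK.
symmetry; transitivity (\sum_(j < M.+1 | ~~ (m %| j)) \sum_(k < M.+1) (mfree m i == j) * ((mval m i == k) * F i)).
  by apply: eq_bigr => j nd; apply: eq_bigr => k _; rewrite e2 // -mulnb mulnA.
under eq_bigr => j _ do rewrite -big_distrr /= (sum_ind M (mval m i) (fun _ => F i)).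
have -> : mval m i <= M by have := mval_lt ip; have := ltn_ord i; lia.
rewrite big_mkcond /=.
transitivity (\sum_(j < M.+1) (mfree m i == j) * (if ~~ (m %| j) then F i else 0)).
  by apply: eq_bigr => j _; case: ifP; rewrite ?muln0.
rewrite (sum_ind M (mfree m i) (fun j => if ~~ (m %| j) then F i else 0)) mfree_ndvd //.
by have -> : mfree m i <= M by have := mfree_le i; have := ltn_ord i; lia.
Qed.

Lemma digits_sum L x : x < m ^ L -> \sum_(l < L) (x %/ m ^ l %% m) * m ^ l = x.
Proof.
elim: L x => [|L IH] x h.
  by rewrite big_ord0; move: h; rewrite expn0; case: x.
rewrite big_ord_recl /= expn0 divn1 muln1.
under eq_bigr => l _ do rewrite /bump /= add1n expnS divnMA mulnCA.
rewrite -big_distrr /= IH; first by rewrite [in RHS](divn_eq x m); lia.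
by rewrite ltn_divLR ?m0 // -expnSr.
Qed.

Definition rotd (d : nat -> nat -> nat) k l := if k is k'.+1 then d k' l.+1 else d l 0.

Lemma rot_sum T (d : nat -> nat -> nat) :
  (forall k l, T <= k.+1 -> d k l = 0) -> (forall k l, T <= l.+1 -> d k l = 0) ->
  \sum_(k < T) \sum_(l < T) rotd d k l * m ^ (k + l) =
  \sum_(k < T) \sum_(l < T) d k l * m ^ (k + l).
Proof.
case: T => [|T] dk dl; first by rewrite !big_ord0.
rewrite big_ord_recl /=.
under [in RHS]eq_bigr => k _ do rewrite big_ord_recl /=.
rewrite big_split /=.
have -> : \sum_(k < T.+1) d k 0 * m ^ (k + 0) = \sum_(l < T.+1) d l 0 * m ^ (0 + l).
  by apply: eq_bigr => k _; rewrite addn0.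
congr (_ + _).
transitivity (\sum_(k < T) \sum_(l < T) d k l.+1 * m ^ (k.+1 + l)).
  apply: eq_bigr => k _; rewrite big_ord_recr /= dl ?mul0n ?addn0 //.
rewrite [in RHS]big_ord_recr /=.
rewrite [X in _ = _ + X]big1 ?addn0 => [|l _]; last by rewrite dk.
by apply: eq_bigr => k _; apply: eq_bigr => l _; rewrite /bump /= add1n addnS.
Qed.

End M.


Section R.
Variable m : nat.
Hypothesis m2 : 1 < m.

Lemma pfm_zero_l n g j k l : valid n g -> n <= l -> pfm m g j k l = 0.
Proof.
move=> v nl; rewrite /pfm divn_small ?mod0n //; apply: (leq_ltn_trans (valid_le v _)).
by apply: (leq_ltn_trans nl); apply: ltn_expl.
Qed.

Lemma pfm_zero_k n g j k l : valid n g -> 0 < j -> n <= k -> pfm m g j k l = 0.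
Proof.
move=> [g0 gz _] jp nk; rewrite /pfm gz ?div0n ?mod0n //.
have := ltn_expl k m2; have : m ^ k <= j * m ^ k by rewrite leq_pmull. lia.
Qed.

Lemma pfm_rot0 n g j k l : valid n g -> n <= l -> pfm_rot m g j k l = 0.
Proof.
move=> v nl; case: k => [|k].
2: by change (pfm m g j k l.+1 = 0); apply: (pfm_zero_l _ _ v); lia.
change (pfm m g j l 0 = 0).
case: (posnP j) => [->|jp].
  by case: v => g0 _ _; rewrite /pfm mul0n g0 div0n mod0n.
exact: (@pfm_zero_k n g j l 0 v jp nl).
Qed.

Lemma rho_mult_trunc n n' g : valid n g -> n <= n' -> rho_mult m n' g =1 rho_mult m n g.
Proof.
move=> v le i; rewrite /rho_mult.
rewrite (@sum_trunc n'.+1 n (fun l => pfm_rot m g (mfree m i) (mval m i) l * m ^ l)).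
- rewrite (@sum_trunc n.+1 n (fun l => pfm_rot m g (mfree m i) (mval m i) l * m ^ l)) //.
  by move=> l nl; rewrite (pfm_rot0 _ _ v nl).
- lia.
- by move=> l nl; rewrite (pfm_rot0 _ _ v nl).
Qed.

Lemma rho_mult0 n g : g 0 = 0 -> rho_mult m n g 0 = 0.
Proof.
move=> g0; rewrite /rho_mult mval0 mfree0 big1 // => l _.
by rewrite /= /pfm mul0n g0 div0n mod0n.
Qed.

Lemma rho_valid n g : valid n g -> valid n (rho_mult m n g).
Proof.
move=> v; have gle := valid_le v; case: (v) => g0 gz gs.
have m0 : 0 < m by apply: ltnW.
set M := m * n.
have nM : n <= M by rewrite /M leq_pmull.
have Rz : forall i, M < i -> rho_mult m n g i = 0.
move=> i Mi; rewrite /rho_mult big1 // => l _.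
have ip : 0 < i by lia.
have e := mfreeK m i.
case k: (mval m i) e => [|k'] e /=.
  rewrite mfree_val0 // /pfm gz ?mod0n ?mul0n //.
  have : i <= i * m ^ l by rewrite leq_pmulr // expn_gt0 m0.
  lia.
rewrite /pfm gz ?div0n ?mod0n ?mul0n //.
move: e; rewrite expnS mulnCA => e.
have : m * n < m * (mfree m i * m ^ k') by rewrite e.
by rewrite ltn_pmul2l.
apply: (@valid_of_sum M) => //; first by apply: rho_mult0.
rewrite (@decomp m m2 M (fun i => i * rho_mult m n g i)); last first.
- by move=> x Mx; rewrite Rz ?muln0.
- by [].
transitivity (\sum_(j < M.+1 | ~~ (m %| j)) \sum_(k < M.+1) (j * m ^ k) * g (j * m ^ k)); last first.
  rewrite -(@decomp m m2 M (fun i => i * g i)); last first.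
  - by move=> x Mx; rewrite gz ?muln0 //; lia.
  - by [].
  rewrite (@sum_trunc M.+1 n.+1 (fun i => i * g i)) //; last by move=> x Mx; rewrite gz ?muln0.
apply: eq_bigr => j nd.
have jp : 0 < j by case: (nat_of_ord j) nd => //; rewrite dvdn0.
transitivity (j * \sum_(k < M.+1) \sum_(l < M.+1) rotd (pfm m g j) k l * m ^ (k + l)).
  rewrite big_distrr; apply: eq_bigr => k _ /=; rewrite /rho_mult mvalE // mfreeE //.
  have t1 := @sum_trunc n.+1 n (fun l => pfm_rot m g j k l * m ^ l).
  have t2 := @sum_trunc M.+1 n (fun l => rotd (pfm m g j) k l * m ^ (k + l)).
  rewrite t1 //; last by move=> l nl; rewrite (pfm_rot0 _ _ v nl).
  rewrite t2 //; first last.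
  - by move=> l nl; change (rotd (pfm m g j) k l) with (pfm_rot m g j k l); rewrite (pfm_rot0 _ _ v nl).
  - lia.
  rewrite -mulnA big_distrr; congr (_ * _); apply: eq_bigr => l _ /=.
  by rewrite expnD mulnCA.
rewrite rot_sum; last first.
- by move=> k l h; apply: (@pfm_zero_l n g j k l v); lia.
- by move=> k l h; apply: (@pfm_zero_k n g j k l v jp); lia.
rewrite big_distrr; apply: eq_bigr => k _ /=.
rewrite -[in RHS](@digits_sum m m2 M.+1 (g (j * m ^ k))); last first.
  apply: (leq_ltn_trans (gle _)); apply: (leq_ltn_trans nM); exact: (ltn_trans (ltnSn M) (ltn_expl M.+1 m2)).
rewrite !big_distrr; apply: eq_bigr => l _ /=; rewrite /pfm expnD; nia.
Qed.


Lemma mult_rho n (la : partn n) : mult (rho m la) =1 rho_mult m n (mult la).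
Proof.
have v := rho_valid (valid_mult la).
rewrite /rho.
have -> : rho_ffun m la = mkf n (rho_mult m n (mult la)).
  apply/ffunP => i; rewrite !ffunE; case: eqP => // ->.
  by apply: val_inj; rewrite /= rho_mult0 ?inordK //; case: (valid_mult la).
exact: mult_insubd.
Qed.

Definition isEf (g : nat -> nat) := forall i, ~~ (m %| i) -> m %| g i.
Definition isDf (g : nat -> nat) := forall i, g i < m /\ (m %| i -> g i = 0).

Lemma rho_isE n g : isEf g -> isEf (rho_mult m n g).
Proof.
move=> hE i nd.
have ip : 0 < i by case: i nd => //; rewrite dvdn0.
have k0 : mval m i = 0.
  by apply/eqP; rewrite -leqn0 leqNgt; apply/negP => /mval_pos_dvd h; rewrite h in nd.
rewrite /rho_mult k0 mfree_val0 // big_ord_recl dvdn_add //.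
  rewrite /= /pfm expn0 muln1 divn1 muln1; have := hE _ nd; rewrite /dvdn => /eqP -> //; by rewrite mod0n.
apply: dvdn_sum => l _; rewrite /bump /= expnS.
by rewrite mulnCA dvdn_mulr.
Qed.

Lemma rho_add n nE E D : valid nE E -> nE <= n -> isEf E -> isDf D ->
  forall i, rho_mult m n (fun x => E x + D x) i = rho_mult m nE E i + D i.
Proof.
move=> vE le hE hD i; rewrite -(rho_mult_trunc vE le i).
case: (vE) => E0 _ _.
have D0 : D 0 = 0 by case: (hD 0) => _ ->.
have m0 : 0 < m by apply: ltnW.
have key : forall l, pfm_rot m (fun x => E x + D x) (mfree m i) (mval m i) l =
   pfm_rot m E (mfree m i) (mval m i) l + ((mval m i == 0) && (l == 0)) * D i.
  move=> l; case k: (mval m i) => [|k'].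
    have ji := mfree_val0 k.
    case: l => [|l]; rewrite /= ji /pfm expn0 !divn1 ?muln1 /=.
      rewrite mul1n; case: (posnP i) => [->|ip]; first by rewrite E0 D0 mod0n.
      have nd := mval0_ndvd m2 ip k.
      have /dvdnP [q ->] := hE _ nd.
      rewrite modnMDl modn_small ?modnMl //; by case: (hD i).
    have dv : m %| i * m ^ l.+1 by rewrite expnS mulnCA dvdn_mulr.
    by case: (hD (i * m ^ l.+1)) => _ ->; rewrite ?addn0.
  rewrite /= addn0 /pfm.
  set x := mfree m i * m ^ k'.
  case: (boolP (m %| x)) => hx.
    by case: (hD x) => _ ->; rewrite ?addn0.
  have /dvdnP [q ->] := hE _ hx.
  rewrite expnS !divnMA divnMDl // mulnK // (@divn_small (D x) m) ?addn0 //.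
  by case: (hD x).
rewrite /rho_mult.
under eq_bigr => l _ do rewrite key mulnDl.
rewrite big_split /=; congr (_ + _).
rewrite big_ord_recl big1 => [|l _]; last by rewrite /= andbF.
rewrite /= andbT expn0 muln1 addn0.
case: (posnP (mval m i)) => [k0|kp].
  by rewrite mul1n.
by rewrite mul0n; case: (hD i) => _ ->; rewrite ?(mval_pos_dvd kp).
Qed.

End R.


Lemma order_conj (T1 T2 : finType) (f : T1 -> T1) (g : T2 -> T2) (h : T1 -> T2) (S : pred T1) x :
  injective h -> S x -> (forall y, S y -> S (f y)) -> (forall y, S y -> g (h y) = h (f y)) ->
  order g (h x) = order f x.
Proof.
move=> hi Sx Sf com.
have it : forall i, iter i g (h x) = h (iter i f x) /\ S (iter i f x).
  elim => [|i [IH Si]] //=; rewrite IH com //; split => //; exact: Sf.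
rewrite /order -(card_image hi (fconnect f x)).
apply: eq_card => y; apply/idP/imageP.
  move=> /iter_findex <-; rewrite (it _).1.
  by exists (iter (findex g (h x) y) f x) => //; exact: fconnect_iter.
move=> [z zc ->]; rewrite -(iter_findex zc) -(it _).1; exact: fconnect_iter.
Qed.

Section C.
Variable m : nat.
Hypothesis m2 : 1 < m.

Definition Dp (g : nat -> nat) i := if m %| i then 0 else g i %% m.
Definition Ep (g : nat -> nat) i := g i - Dp g i.
Definition isEb n (E : partn n) : bool := [forall i : 'I_n.+1, (m %| i) || (m %| mult E i)].
Definition isDb n (D : partn n) : bool :=
  [forall i : 'I_n.+1, (mult D i < m) && ((m %| i) ==> (mult D i == 0))].
Definition dcount r := #|[pred D : partn r | isDb D]|.

Lemma isEbP n (E : partn n) : reflect (isEf m (mult E)) (isEb E).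
Proof.
apply: (iffP forallP) => h.
  move=> i nd; case: (leqP i n) => iN.
    by have := h (Ordinal (iN : i < n.+1)); rewrite (negbTE nd).
  by case: (valid_mult E) => _ z _; rewrite z.
by move=> i; case: (boolP (m %| i)) => //= nd; apply: h.
Qed.

Lemma isDbP n (D : partn n) : reflect (isDf m (mult D)) (isDb D).
Proof.
apply: (iffP forallP) => h.
  move=> i; case: (leqP i n) => iN.
    have /andP [a b] := h (Ordinal (iN : i < n.+1)); split => // di.
    by apply/eqP; move: b; rewrite /= di.
  by case: (valid_mult D) => _ z _; rewrite z //; split => //; apply: ltnW.
move=> i; case: (h i) => a b; rewrite a /=; apply/implyP => di; by rewrite b.
Qed.

Lemma Dp_isD g : isDf m (Dp g).
Proof. move=> i; rewrite /Dp; case: ifP => h; split => //; rewrite ?ltn_mod; exact: ltnW. Qed.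

Lemma Dp_le g i : Dp g i <= g i.
Proof. by rewrite /Dp; case: ifP => // _; apply: leq_mod. Qed.

Lemma Ep_isE g : isEf m (Ep g).
Proof.
move=> i nd; rewrite /Ep /Dp (negbTE nd) {1}(divn_eq (g i) m) addnK.
exact: dvdn_mull.
Qed.

Lemma EDp g i : Ep g i + Dp g i = g i.
Proof. by rewrite /Ep subnK // Dp_le. Qed.

Definition wD N g := \sum_(i < N.+1) i * Dp g i.

Lemma valid_Dp N g : valid N g -> valid (wD N g) (Dp g).
Proof.
move=> [g0 gz _]; apply: (@valid_of_sum N) => //.
  by move=> i iN; rewrite /Dp (gz _ iN) mod0n; case: ifP.
by rewrite /Dp dvdn0.
Qed.

Lemma valid_Ep N g : valid N g -> valid (N - wD N g) (Ep g).
Proof.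
move=> v; case: (v) => g0 gz gs; apply: (@valid_of_sum N).
- by move=> i iN; rewrite /Ep gz.
- by rewrite /Ep g0.
have : \sum_(i < N.+1) i * Ep g i + wD N g = N.
  by rewrite /wD -big_split /= -[RHS]gs; apply: eq_bigr => i _; rewrite -mulnDr EDp.
rewrite /wD; lia.
Qed.

Lemma dvd_Ep N g : valid N g -> m %| N - wD N g.
Proof.
move=> v; case: (valid_Ep v) => _ _ <-; apply: dvdn_sum => i _.
case: (boolP (m %| i)) => h; first by apply: dvdn_mulr.
by apply: dvdn_mull; apply: Ep_isE.
Qed.

Lemma valid_add a b E D : valid a E -> valid b D -> valid (a + b) (fun i => E i + D i).
Proof.
move=> [E0 Ez Es] [D0 Dz Ds]; apply: (@valid_of_sum (a + b)).
- by move=> i h; rewrite Ez ?Dz //; lia.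
- by rewrite E0 D0.
under eq_bigr => i _ do rewrite mulnDr.
rewrite big_split /=.
rewrite (@sum_trunc (a + b).+1 a.+1 (fun i => i * E i)); last first.
  by move=> k h; rewrite Ez ?muln0.
  lia.
rewrite (@sum_trunc (a + b).+1 b.+1 (fun i => i * D i)); last first.
  by move=> k h; rewrite Dz ?muln0.
  lia.
by rewrite Es Ds.
Qed.

Lemma Dp_add E D : isEf m E -> isDf m D -> Dp (fun i => E i + D i) =1 D.
Proof.
move=> hE hD i; rewrite /Dp; case: ifP => di; first by case: (hD i) => _ ->.
have /dvdnP [q ->] := hE _ (negbT di).
by rewrite modnMDl modn_small //; case: (hD i).
Qed.

Lemma Ep_add E D : isEf m E -> isDf m D -> Ep (fun i => E i + D i) =1 E.
Proof. by move=> hE hD i; rewrite /Ep Dp_add // addnK. Qed.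


Lemma Dp_ext f1 f2 : f1 =1 f2 -> Dp f1 =1 Dp f2.
Proof. by move=> e i; rewrite /Dp e. Qed.

Lemma Ep_ext f1 f2 : f1 =1 f2 -> Ep f1 =1 Ep f2.
Proof. by move=> e i; rewrite /Ep (Dp_ext e) e. Qed.

Lemma wD_le N g : valid N g -> wD N g <= N.
Proof.
case=> _ _ gs; rewrite -[X in _ <= X]gs; apply: leq_sum => i _.
by rewrite leq_mul2l Dp_le orbT.
Qed.

Lemma wD_valid N n D : valid n D -> n <= N -> \sum_(i < N.+1) i * D i = n.
Proof.
case=> D0 Dz Ds nN; rewrite -[RHS]Ds (@sum_trunc N.+1 n.+1 (fun i => i * D i)) //.
by move=> k h; rewrite Dz ?muln0.
Qed.

Lemma count_lemma N (P : pred (partn N)) (Q : forall t, pred (partn (m * t))) :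
  (forall (la : partn N) t (E : partn (m * t)), mult E =1 Ep (mult la) -> P la = Q t E) ->
  #|P| = \sum_(t < N.+1 | m * t <= N)
           #|[pred E : partn (m * t) | isEb E && Q t E]| * dcount (N - m * t).
Proof.
move=> hPQ.
have m0 : 0 < m by apply: ltnW.
pose tof (la : partn N) : 'I_N.+1 := inord ((N - wD N (mult la)) %/ m).
have tofE : forall la, nat_of_ord (tof la) = (N - wD N (mult la)) %/ m.
  move=> la; rewrite inordK // ltnS; apply: leq_trans (leq_div _ _) _; lia.
rewrite -sum1_card (partition_big tof (fun t : 'I_N.+1 => m * t <= N)); last first.
  move=> la _; rewrite tofE mulnC; apply: leq_trans (leq_divM _ _) _; lia.
apply: eq_bigr => t ht.
pose A := [pred la : partn N | P la && (tof la == t)].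
pose B := [pred ED : partn (m * t) * partn (N - m * t) | (isEb ED.1 && Q t ED.1) && isDb ED.2].
have -> : \sum_(i | (i \in P) && (tof i == t)) 1 = #|A| by rewrite -sum1_card.
have -> : #|[pred E : partn (m * t) | isEb E && Q t E]| * dcount (N - m * t) = #|B|.
  rewrite /dcount -sum1_card big_distrl /=.
  under eq_bigr => E _ do rewrite mul1n -sum1_card.
  by rewrite pair_big /= -sum1_card.
have eN : m * t + (N - m * t) = N by lia.
pose phi (ED : partn (m * t) * partn (N - m * t)) : partn N :=
  mkp N (fun i => mult ED.1 i + mult ED.2 i).
have vphi : forall ED : partn (m * t) * partn (N - m * t),
    valid N (fun i => mult ED.1 i + mult ED.2 i).
  by move=> ED; have := valid_add (valid_mult ED.1) (valid_mult ED.2); rewrite eN.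
have mphi : forall ED, mult (phi ED) =1 (fun i => mult ED.1 i + mult ED.2 i).
  by move=> ED; apply: mult_insubd.
have inj : {in B &, injective phi}.
  move=> [E1 D1] [E2 D2] /andP [/andP [/isEbP e1 _] /isDbP d1] /andP [/andP [/isEbP e2 _] /isDbP d2] h.
  have hm : forall i, mult E1 i + mult D1 i = mult E2 i + mult D2 i.
    by move=> i; rewrite -(mphi (E1, D1) i) h (mphi (E2, D2) i).
  congr (_, _); apply: mult_inj => i.
    by rewrite -(Ep_add e1 d1 i) -(Ep_add e2 d2 i); apply: Ep_ext.
  by rewrite -(Dp_add e1 d1 i) -(Dp_add e2 d2 i); apply: Dp_ext.
rewrite -(card_in_image inj); apply: eq_card => la; apply/idP/imageP.
  move=> /andP [Pla /eqP tt].
  set g := mult la.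
  have vg : valid N g := valid_mult la.
  have ew : N - wD N g = m * t.
    by have := divnK (dvd_Ep vg); rewrite -tofE tt mulnC.
  have vE : valid (m * t) (Ep g) by rewrite -ew; apply: valid_Ep.
  have vD : valid (N - m * t) (Dp g).
    have le := wD_le vg; have e : wD N g = N - m * t by lia.
    rewrite -e; exact: valid_Dp.
  exists (mkp (m * t) (Ep g), mkp (N - m * t) (Dp g)).
    rewrite /B inE /=; apply/andP; split; [apply/andP; split|].
    - by apply/isEbP => i nd; rewrite (mult_insubd _ vE); exact: Ep_isE.
    - by rewrite -(hPQ la) // => i; rewrite (mult_insubd _ vE).
    - by apply/isDbP => i; rewrite (mult_insubd _ vD); exact: Dp_isD.
  apply: mult_inj => i; rewrite mphi /= (mult_insubd _ vE) (mult_insubd _ vD).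
  by rewrite EDp.
move=> [[E D] /andP [/andP [/isEbP hE hQ] /isDbP hD] ->].
have eE : mult E =1 Ep (mult (phi (E, D))).
  by move=> i; rewrite (Ep_ext (mphi (E, D))) Ep_add.
apply/andP; split; first by rewrite (hPQ _ t E).
apply/eqP/val_inj; change (nat_of_ord (tof (phi (E, D))) = t); rewrite tofE.
have -> : wD N (mult (phi (E, D))) = N - m * t.
  rewrite /wD; transitivity (\sum_(i < N.+1) i * mult D i).
    by apply: eq_bigr => i _; rewrite (Dp_ext (mphi (E, D))) Dp_add.
  apply: wD_valid; [exact: valid_mult | exact: leq_subr].
by rewrite subKn // mulKn.
Qed.

End C.


Lemma rho_mult_ext m n f1 f2 : f1 =1 f2 -> rho_mult m n f1 =1 rho_mult m n f2.
Proof.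
move=> e i; rewrite /rho_mult; apply: eq_bigr => l _.
by rewrite /pfm_rot /pfm; case: (mval m i) => [|k]; rewrite e.
Qed.

Lemma ord_eq m N t (la : partn N) (E : partn (m * t)) : 1 < m ->
  mult E =1 Ep m (mult la) -> order (rho m (n:=N)) la = order (rho m (n:=m * t)) E.
Proof.
move=> m2 eE.
set g := mult la; have vg : valid N g := valid_mult la.
have vE := valid_mult E.
have Eg : forall i, mult E i <= g i by move=> i; rewrite eE /Ep leq_subr.
have mtN : m * t <= N.
  rewrite -[X in X <= _](@wD_valid (m * t + N) (m * t) (mult E) vE (leq_addr _ _)).
  rewrite -[X in _ <= X](@wD_valid (m * t + N) N g vg (leq_addl _ _)).
  by apply: leq_sum => i _; rewrite leq_mul2l Eg orbT.
set D := Dp m g.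
have hD : isDf m D := Dp_isD m2 g.
have vD : valid (N - m * t) D.
  have e : wD m N g = N - m * t.
    have : \sum_(i < N.+1) i * mult E i + wD m N g = N.
      rewrite /wD -big_split /=; case: (vg) => _ _ gs; rewrite -[in RHS]gs.
      by apply: eq_bigr => i _; rewrite eE -mulnDr EDp.
    rewrite (@wD_valid N (m * t) (mult E) vE mtN); lia.
  rewrite -e; exact: valid_Dp.
have eN : m * t + (N - m * t) = N by lia.
have vh : forall E' : partn (m * t), valid N (fun i => mult E' i + D i).
  by move=> E'; have := valid_add m2 (valid_mult E') vD; rewrite eN.
pose h (E' : partn (m * t)) : partn N := mkp N (fun i => mult E' i + D i).
have mh : forall E', mult (h E') =1 (fun i => mult E' i + D i).
  by move=> E'; apply: mult_insubd.
have -> : la = h E.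
  by apply: mult_inj => i; rewrite mh eE /D EDp.
apply: (@order_conj _ _ _ _ h (@isEb m (m * t))).
- move=> E1 E2 e; apply: mult_inj => i.
  by have := mh E1 i; rewrite e mh => /addIn.
- by apply/isEbP => i nd; rewrite eE; apply: Ep_isE.
- move=> y /isEbP hy; apply/isEbP => i nd; rewrite (mult_rho m2).
  exact: rho_isE.
- move=> y /isEbP hy; apply: mult_inj => i.
  rewrite (mult_rho m2) mh (mult_rho m2) (rho_mult_ext _ _ (mh y)).
  exact: (rho_add m2 (valid_mult y) mtN hy hD).
Qed.


Lemma card_partn0 m t : m * t = 0 -> #|[pred E : partn (m * t) | isEb m E && true]| = 1.
Proof.
move=> e.
have all0 : forall E : partn (m * t), mult E =1 (fun _ => 0).
  move=> E i; case: (valid_mult E) => E0 Ez _.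
  by case: i => [//|i]; apply: Ez; rewrite e.
rewrite -(card1 (dflt (m * t))); apply: eq_card => E; rewrite !inE andbT.
have -> : E = dflt (m * t) by apply: mult_inj => i; rewrite !all0.
rewrite eqxx; apply/isEbP => i _; by rewrite all0 dvdn0.
Qed.

Theorem theorem1 (m A B C : nat) :
  2 <= m -> 1 <= A -> 1 <= C ->
  (forall n : nat, C %| p (A * n + B)) ->
  B < A -> A %| m ->
  forall k n : nat, 0 < k -> C %| p_rho m (A * n + B) k.
Proof.
move=> m2 A1 C1 hp BA Am k n _.
have [q hq] := dvdnP Am.
have q0 : 0 < q by case: q hq => //; lia.
have key : forall n' t, m * t <= A * n' + B ->
    A * n' + B - m * t = A * (n' - q * t) + B.
  move=> n' t h; have qt : q * t <= n'.
    rewrite leqNgt; apply/negP => lt.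
    have : A * n'.+1 <= A * (q * t) by rewrite leq_mul2l lt orbT.
    rewrite hq in h; nia.
  rewrite hq mulnBr; nia.
have hd : forall n', C %| dcount m (A * n' + B).
  elim/ltn_ind => n' IH.
  have := hp n'.
  have -> : p (A * n' + B) = #|@predT (partn (A * n' + B))| by apply: eq_card.
  rewrite (count_lemma m2 (Q := fun t _ => true)) // (bigD1 ord0) /=; last by rewrite muln0.
  rewrite card_partn0 ?muln0 // mul1n subn0 dvdn_addl //.
  apply: dvdn_sum => t /andP [ht t0]; apply: dvdn_mull.
  rewrite key //; apply: IH.
  have tp : 0 < t.
    rewrite lt0n; apply: contra t0 => /eqP e; apply/eqP/val_inj; exact: e.
  rewrite hq in ht; nia.
rewrite /p_rho (count_lemma m2 (Q := fun t E => order (rho m (n := m * t)) E == k)); last first.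
  by move=> la t E eE; rewrite /= (ord_eq m2 eE).
apply: dvdn_sum => t ht; apply: dvdn_mull.
by rewrite key.
Qed.
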